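(* Assume $\omega_\ell>0$, $\sum_\ell\omega_\ell=1$ and $\|\omega\|_\infty\sum_\ell\omega_\ell d_\ell\le c_0\sum_\ell\omega_\ell^2d_\ell$ for a constant $c_0>0$. Fix any $\alpha>0$ and $r\ge1$. Then there is a constant $C=C(c_0)$ such that with probability at least $1-n^{-r}$ the following holds: for every $m\in[n]$ with $m\le\alpha n$ and every $I,J\subseteq[n]$ with $|I|=|J|=m$, letting $I'\subseteq I$ be the set of $i\in I$ with $\sum_{j\in J}\bar A_{ij}\le\alpha\sum_\ell\omega_\ell d_\ell$, $$\|(\bar A-\mathbb E\bar A)_{I'\times J}\|_{\infty\to2}\le C\sqrt{\alpha\Big(\sum_\ell\omega_\ell^2d_\ell\Big)\,m\,r\log\Big(\frac{en}{m}\Big)}.$$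
   Context: Here $A^{(1)},\dots,A^{(L)}$ are random $n\times n$ matrices whose entries $A^{(\ell)}_{ij}\sim\mathrm{Bern}(p^{(\ell)}_{ij})$, $i,j\in[n]$, $\ell\in[L]$, are all mutually independent (no symmetry imposed). $\bar A=\sum_\ell\omega_\ell A^{(\ell)}$, $d_\ell=\max_{i,j}np^{(\ell)}_{ij}$. For a matrix $B$ and index sets $I',J$, $B_{I'\times J}$ is the submatrix with rows in $I'$ and columns in $J$; $\|B\|_{\infty\to2}=\sup_{\|x\|_\infty\le1}\|Bx\|_2$. *)

(* Defs.v *)
From HB Require Import structures.
From mathcomp Require Import all_boot all_order all_algebra.
From mathcomp Require Import all_classical all_reals all_analysis.
Set Implicit Arguments. Unset Strict Implicit. Unset Printing Implicit Defensive.
Import Order.TTheory GRing.Theory Num.Theory.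
Local Open Scope ring_scope.

(* Sample space: an outcome assigns to each layer l : 'I_L an n x n 0/1 matrix
   (the realisation of A^(l)). *)
Definition outcome (n L : nat) := {ffun 'I_L -> 'M[bool]_n}.

Section Defs.
Variables (R : realType) (n L : nat).
Variable p : 'I_L -> 'I_n -> 'I_n -> R.
Variable w : 'I_L -> R.

(* Probability of an outcome under the product measure of independent
   Bernoulli(p^(l)_{ij}) entries. *)
Definition weight (x : outcome n L) : R :=
  \prod_(l < L) \prod_(i < n) \prod_(j < n)
     (if x l i j then p l i j else 1 - p l i j).

Definition Prob (E : outcome n L -> Prop) : R :=
  \sum_(x : outcome n L | `[< E x >]) weight x.

Definition Expect (f : outcome n L -> R) : R :=
  \sum_(x : outcome n L) weight x * f x.

Definition Abar (x : outcome n L) : 'M[R]_n :=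
  \matrix_(i, j) \sum_(l < L) w l * (x l i j)%:R.

Definition EAbar : 'M[R]_n := \matrix_(i, j) Expect (fun x => Abar x i j).

(* d_l = max_{i,j} n p^(l)_{ij}  (the max is taken with 0 as neutral element,
   harmless since p >= 0) *)
Definition dl (l : 'I_L) : R :=
  \big[Num.max/0]_(ij : 'I_n * 'I_n) (n%:R * p l ij.1 ij.2).

Definition w_inf : R := \big[Num.max/0]_(l < L) `|w l|.
End Defs.

(* || B_{I' x J} ||_{infty -> 2} = sup_{||x||_infty <= 1} || B_{I' x J} x ||_2,
   x ranging over vectors indexed by J (coordinates outside J are irrelevant). *)
Definition norm_inf2 (R : realType) (n : nat) (B : 'M[R]_n)
    (I' J : {set 'I_n}) : R :=
  sup [set y : R | exists x : 'I_n -> R,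
        (forall j, `|x j| <= 1) /\
        y = Num.sqrt (\sum_(i in I') (\sum_(j in J) B i j * x j) ^+ 2)].

(* Main.v *)
Require Import Defs.
From HB Require Import structures.
From mathcomp Require Import all_boot all_order all_algebra.
From mathcomp Require Import all_classical all_reals all_analysis.
Import Order.TTheory GRing.Theory Num.Theory.
Local Open Scope ring_scope.
Set Implicit Arguments. Unset Strict Implicit. Unset Printing Implicit Defensive.
Definition rowT (L n : nat) := {ffun 'I_L * 'I_n -> bool}.

Definition bern (R : realType) (q : R) (b : bool) : R := if b then q else 1 - q.

Definition wrow (R : realType) (n L : nat) (p : 'I_L -> 'I_n -> 'I_n -> R)
  (i : 'I_n) (rho : rowT L n) : R :=
  \prod_(lj : 'I_L * 'I_n) bern (p lj.1 i lj.2) (rho lj).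

Definition rowf (n L : nat) (x : outcome n L) (i : 'I_n) : rowT L n :=
  [ffun lj => x lj.1 i lj.2].

Definition Erow (R : realType) (n L : nat) (p : 'I_L -> 'I_n -> 'I_n -> R)
  (i : 'I_n) (F : rowT L n -> R) : R :=
  \sum_(rho : rowT L n) wrow p i rho * F rho.

Lemma weight_rows (R : realType) (n L : nat) (p : 'I_L -> 'I_n -> 'I_n -> R)
  (x : outcome n L) :
  weight p x = \prod_(i < n) wrow p i (rowf x i).
Proof.
rewrite /weight exchange_big /=; apply: eq_bigr => i _.
rewrite /wrow; transitivity (\prod_(l < L) \prod_(j < n) bern (p l i j) (x l i j)).
  apply: eq_bigr => l _; apply: eq_bigr => j _; by rewrite /bern.
rewrite pair_bigA /=; apply: eq_bigr => lj _; by rewrite /rowf ffunE.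
Qed.

Lemma expect_rows (R : realType) (n L : nat) (p : 'I_L -> 'I_n -> 'I_n -> R)
  (F : 'I_n -> rowT L n -> R) :
  \sum_(x : outcome n L) weight p x * \prod_(i < n) F i (rowf x i)
  = \prod_(i < n) Erow p i (F i).
Proof.
rewrite /Erow bigA_distr_bigA /=.
pose phi (x : outcome n L) : {ffun 'I_n -> rowT L n} := [ffun i => rowf x i].
pose psi (P : {ffun 'I_n -> rowT L n}) : outcome n L :=
  [ffun l => \matrix_(i, j) P i (l, j)].
have phiK : cancel phi psi.
  move=> x; apply/ffunP => l; apply/matrixP => i j.
  by rewrite /psi /phi !ffunE mxE ffunE /rowf ffunE.
have psiK : cancel psi phi.
  move=> P; apply/ffunP => i; rewrite /phi /psi !ffunE; apply/ffunP => [[l j]].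
  by rewrite /rowf !ffunE mxE.
rewrite (reindex phi) /=; last by exists psi => ? _.
apply: eq_bigr => x _; rewrite big_split /= weight_rows.
by congr (_ * _); apply: eq_bigr => i _; rewrite /phi ffunE.
Qed.

Lemma Erow_prod (R : realType) (n L : nat) (p : 'I_L -> 'I_n -> 'I_n -> R)
  (i : 'I_n) (G : 'I_L * 'I_n -> bool -> R) :
  Erow p i (fun rho => \prod_(lj : 'I_L * 'I_n) G lj (rho lj))
  = \prod_(lj : 'I_L * 'I_n) (p lj.1 i lj.2 * G lj true + (1 - p lj.1 i lj.2) * G lj false).
Proof.
rewrite /Erow /wrow.
have -> : \prod_(lj : 'I_L * 'I_n) (p lj.1 i lj.2 * G lj true + (1 - p lj.1 i lj.2) * G lj false)
  = \prod_(lj : 'I_L * 'I_n) \sum_(b : bool) bern (p lj.1 i lj.2) b * G lj b.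
  apply: eq_bigr => lj _; rewrite big_bool /= /bern addrC //.
rewrite bigA_distr_bigA; apply: eq_bigr => rho _; by rewrite big_split.
Qed.

Lemma bern_ge0 (R : realType) (q : R) b : 0 <= q <= 1 -> 0 <= bern q b.
Proof. by case/andP => h0 h1; case: b => //=; rewrite subr_ge0. Qed.

Lemma wrow_ge0 (R : realType) (n L : nat) (p : 'I_L -> 'I_n -> 'I_n -> R) i rho :
  (forall l i j, 0 <= p l i j <= 1) -> 0 <= wrow p i rho.
Proof. by move=> hp; apply: prodr_ge0 => lj _; apply: bern_ge0. Qed.

Lemma weight_ge0 (R : realType) (n L : nat) (p : 'I_L -> 'I_n -> 'I_n -> R) x :
  (forall l i j, 0 <= p l i j <= 1) -> 0 <= weight p x.
Proof. by move=> hp; rewrite weight_rows; apply: prodr_ge0 => i _; apply: wrow_ge0. Qed.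

Lemma Erow1 (R : realType) (n L : nat) (p : 'I_L -> 'I_n -> 'I_n -> R) i :
  Erow p i (fun _ => 1) = 1.
Proof.
have := Erow_prod p i (fun _ _ => 1); rewrite big1 // => ->.
by apply: big1 => lj _; rewrite !mulr1 addrC subrK.
Qed.

Lemma weight_sum1 (R : realType) (n L : nat) (p : 'I_L -> 'I_n -> 'I_n -> R) :
  \sum_(x : outcome n L) weight p x = 1.
Proof.
have := expect_rows p (fun _ _ => 1).
rewrite (eq_bigr (fun x => weight p x)) => [->|x _]; last by rewrite big1 ?mulr1.
by apply: big1 => i _; rewrite Erow1.
Qed.

Lemma Expect_rows (R : realType) (n L : nat) (p : 'I_L -> 'I_n -> 'I_n -> R)
  (F : 'I_n -> rowT L n -> R) :
  Expect p (fun x => \prod_(i < n) F i (rowf x i)) = \prod_(i < n) Erow p i (F i).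
Proof. exact: expect_rows. Qed.

Lemma Prob_ge (R : realType) (n L : nat) (p : 'I_L -> 'I_n -> 'I_n -> R)
  (E : outcome n L -> Prop) (f : outcome n L -> R) :
  (forall l i j, 0 <= p l i j <= 1) ->
  (forall x, 0 <= f x) -> (forall x, ~ E x -> 1 <= f x) ->
  1 - Expect p f <= Prob p E.
Proof.
move=> hp f0 f1; rewrite /Prob /Expect -{1}(weight_sum1 p).
rewrite (bigID (fun x => `[< E x >])) /= addrAC -addrA gerDl addrC subr_le0.
apply: (@le_trans _ _ (\sum_(x | ~~ `[< E x >]) weight p x * f x)).
  apply: ler_sum => x hx; rewrite -{1}(mulr1 (weight p x)).
  apply: ler_wpM2l; first exact: weight_ge0.
  by apply: f1 => hE; move: hx; rewrite asboolT.
rewrite [leRHS](bigID (fun x => `[< E x >])) /= lerDr.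
by apply: sumr_ge0 => x _; apply: mulr_ge0 => //; apply: weight_ge0.
Qed.

Lemma Expect_sum (R : realType) (n L : nat) (p : 'I_L -> 'I_n -> 'I_n -> R)
  (I : finType) (P : pred I) (f : I -> outcome n L -> R) :
  Expect p (fun x => \sum_(k | P k) f k x) = \sum_(k | P k) Expect p (f k).
Proof.
rewrite /Expect; under eq_bigr do rewrite mulr_sumr.
by rewrite exchange_big.
Qed.

Lemma Expect_le (R : realType) (n L : nat) (p : 'I_L -> 'I_n -> 'I_n -> R)
  (f g : outcome n L -> R) :
  (forall l i j, 0 <= p l i j <= 1) -> (forall x, f x <= g x) ->
  Expect p f <= Expect p g.
Proof.
move=> hp fg; apply: ler_sum => x _; apply: ler_wpM2l => //; exact: weight_ge0.
Qed.

Lemma Erow_le (R : realType) (n L : nat) (p : 'I_L -> 'I_n -> 'I_n -> R) i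
  (f g : rowT L n -> R) :
  (forall l i j, 0 <= p l i j <= 1) -> (forall x, f x <= g x) ->
  Erow p i f <= Erow p i g.
Proof.
move=> hp fg; apply: ler_sum => x _; apply: ler_wpM2l => //; exact: wrow_ge0.
Qed.

Lemma Erow_sum (R : realType) (n L : nat) (p : 'I_L -> 'I_n -> 'I_n -> R) i
  (I : finType) (P : pred I) (f : I -> rowT L n -> R) :
  Erow p i (fun x => \sum_(k | P k) f k x) = \sum_(k | P k) Erow p i (f k).
Proof.
rewrite /Erow; under eq_bigr do rewrite mulr_sumr.
by rewrite exchange_big.
Qed.

Lemma Erow_lin (R : realType) (n L : nat) (p : 'I_L -> 'I_n -> 'I_n -> R) i
  (f : rowT L n -> R) (a : R) :
  Erow p i (fun x => a * f x) = a * Erow p i f.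
Proof.
rewrite /Erow mulr_sumr; apply: eq_bigr => x _; by rewrite mulrCA.
Qed.

Lemma Erow_coord (R : realType) (n L : nat) (p : 'I_L -> 'I_n -> 'I_n -> R) i
  (lj : 'I_L * 'I_n) :
  Erow p i (fun rho => (rho lj)%:R) = p lj.1 i lj.2.
Proof.
have := Erow_prod p i (fun lj' b => if lj' == lj then (b%:R : R) else 1).
rewrite (bigD1 lj) //= eqxx mulr1 mulr0 addr0 big1 ?mulr1; last first.
  by move=> k /negbTE ->; rewrite !mulr1 addrC subrK.
move=> <-; rewrite /Erow; apply: eq_bigr => rho _; congr (_ * _).
by rewrite (bigD1 lj) //= eqxx big1 ?mulr1 // => k /negbTE ->.
Qed.

Lemma EAbarE (R : realType) (n L : nat) (p : 'I_L -> 'I_n -> 'I_n -> R) (w : 'I_L -> R) i j :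
  EAbar p w i j = \sum_(l < L) w l * p l i j.
Proof.
rewrite /EAbar mxE.
have -> : (fun x => Abar w x i j) =
  (fun x => \prod_(i' < n) (if i' == i then \sum_(l < L) w l * (rowf x i' (l, j))%:R else 1)).
  apply: funext => x; rewrite (bigD1 i) //= eqxx [X in _ * X]big1 ?mulr1; last by move=> k /negbTE ->.
  by rewrite /Abar mxE; apply: eq_bigr => l _; rewrite /rowf ffunE.
rewrite (Expect_rows p (fun i' rho => if i' == i then \sum_(l < L) w l * (rho (l, j))%:R else 1)).
rewrite (bigD1 i) //= eqxx [X in _ * X]big1 ?mulr1; last first.
  by move=> k /negbTE ->; rewrite Erow1.
rewrite Erow_sum; apply: eq_bigr => l _; by rewrite Erow_lin Erow_coord.
Qed.

From mathcomp Require Import ring lra.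

Lemma expR_quad (R : realType) (u : R) : -1 <= u <= 1 -> expR u <= 1 + u + 2 * u ^+ 2.
Proof.
case/andP => hu1 hu2.
have [u0|u0] := leP u 0.
  have h1 : 1 - u <= expR (- u) by have := expR_ge1Dx (- u); rewrite addrC.
  have hp : 0 < expR u := expR_gt0 u.
  have hm : expR u * expR (- u) = 1 by rewrite expRxMexpNx_1.
  have : expR u * (1 - u) <= 1.
    by rewrite -[leRHS]hm; apply: ler_wpM2l; [exact: ltW | exact: h1].
  set a := expR u => ha.
  have h3 : 0 <= - u * u ^+ 2 by rewrite mulr_ge0 ?oppr_ge0 ?sqr_ge0.
  nra.
have h1 : 1 - u / 2 <= expR (- (u / 2)) by have := expR_ge1Dx (- (u / 2)); rewrite addrC.
have hp : 0 < expR (u / 2) := expR_gt0 _.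
have hm : expR (u / 2) * expR (- (u / 2)) = 1 by rewrite expRxMexpNx_1.
have hb : expR (u / 2) * (1 - u / 2) <= 1.
  by rewrite -[leRHS]hm; apply: ler_wpM2l; [exact: ltW | exact: h1].
have -> : expR u = expR (u / 2) ^+ 2 by rewrite -expRM_natl; congr expR; field.
set a := expR (u / 2) in hp hb *.
have hc : 0 < 1 - u / 2 by lra.
have hd : (a * (1 - u / 2)) ^+ 2 <= 1.
  rewrite expr_le1 //; apply: mulr_ge0; lra.
have he : 1 <= (1 + u + 2 * u ^+ 2) * (1 - u / 2) ^+ 2.
  have : 0 <= u ^+ 2 * (1 - u) * (5 - 2 * u).
    by apply: mulr_ge0; [apply: mulr_ge0; [exact: sqr_ge0|lra]|lra].
  move=> h; nra.
rewrite exprMn in hd.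
have hf : 0 < (1 - u / 2) ^+ 2 by apply: exprn_gt0.
rewrite -(ler_pM2r hf); lra.
Qed.

Lemma bern_mgf (R : realType) (q c : R) : 0 <= q <= 1 -> -1 <= c <= 1 ->
  q * expR (c * (1 - q)) + (1 - q) * expR (- (c * q)) <= expR (2 * c ^+ 2 * q).
Proof.
case/andP => q0 q1 /andP [c0 c1].
have h1 : expR (c * (1 - q)) <= 1 + c * (1 - q) + 2 * (c * (1 - q)) ^+ 2.
  apply: expR_quad; apply/andP; split; nra.
have h2 : expR (- (c * q)) <= 1 + - (c * q) + 2 * (- (c * q)) ^+ 2.
  apply: expR_quad; apply/andP; split; nra.
apply: le_trans (expR_ge1Dx _).
apply: (@le_trans _ _ (q * (1 + c * (1 - q) + 2 * (c * (1 - q)) ^+ 2) +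
   (1 - q) * (1 + - (c * q) + 2 * (- (c * q)) ^+ 2))).
  apply: lerD; apply: ler_wpM2l => //; lra.
have : 0 <= c ^+ 2 * q * q by rewrite mulr_ge0 // mulr_ge0 // sqr_ge0.
move=> h; nra.
Qed.

Lemma sum_pair (R : realType) (A B : finType) (F : A * B -> R) :
  \sum_(ab : A * B) F ab = \sum_(a : A) \sum_(b : B) F (a, b).
Proof. by rewrite pair_bigA; apply: eq_bigr => [[a b]]. Qed.

Lemma prod_pair (R : realType) (A B : finType) (F : A * B -> R) :
  \prod_(ab : A * B) F ab = \prod_(a : A) \prod_(b : B) F (a, b).
Proof. by rewrite pair_bigA; apply: eq_bigr => [[a b]]. Qed.

Definition Yrow (R : realType) (n L : nat) (p : 'I_L -> 'I_n -> 'I_n -> R)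
  (w : 'I_L -> R) (i : 'I_n) (J : {set 'I_n}) (s : 'I_n -> R) (rho : rowT L n) : R :=
  \sum_(j in J) s j * \sum_(l < L) w l * ((rho (l, j))%:R - p l i j).

Lemma Yrow_opp (R : realType) (n L : nat) (p : 'I_L -> 'I_n -> 'I_n -> R)
  (w : 'I_L -> R) i J s rho :
  Yrow p w i J (fun j => - s j) rho = - Yrow p w i J s rho.
Proof. by rewrite /Yrow -sumrN; apply: eq_bigr => j _; rewrite mulNr. Qed.

Lemma Yrow_mgf (R : realType) (n L : nat) (p : 'I_L -> 'I_n -> 'I_n -> R)
  (w : 'I_L -> R) i J (s : 'I_n -> R) (lam : R) :
  (forall l i j, 0 <= p l i j <= 1) -> (forall l, 0 <= w l) ->
  (forall j, -1 <= s j <= 1) -> 0 <= lam -> (forall l, lam * w l <= 1) ->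
  Erow p i (fun rho => expR (lam * Yrow p w i J s rho))
    <= expR (2 * lam ^+ 2 * \sum_(j in J) \sum_(l < L) w l ^+ 2 * p l i j).
Proof.
move=> hp hw hs hl hlw.
pose f (lj : 'I_L * 'I_n) (b : bool) : R :=
  if lj.2 \in J then s lj.2 * w lj.1 * (b%:R - p lj.1 i lj.2) else 0.
have eY : forall rho, lam * Yrow p w i J s rho = \sum_(lj : 'I_L * 'I_n) lam * f lj (rho lj).
  move=> rho; rewrite -mulr_sumr; congr (_ * _).
  rewrite /Yrow sum_pair /=.
  rewrite exchange_big /= [RHS](bigID (fun j => j \in J)) /=.
  rewrite [X in _ = _ + X]big1 ?addr0; last first.
    by move=> j hj; apply: big1 => l _; rewrite /f /= (negbTE hj).
  apply: eq_bigr => j hj; rewrite mulr_sumr; apply: eq_bigr => l _.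
  by rewrite /f /= hj mulrA.
under eq_fun do rewrite eY expR_sum.
rewrite (Erow_prod p i (fun lj b => expR (lam * f lj b))).
rewrite mulr_sumr expR_sum.
have -> : \prod_(j in J) expR (2 * lam ^+ 2 * \sum_(l < L) w l ^+ 2 * p l i j)
  = \prod_(lj : 'I_L * 'I_n) expR (if lj.2 \in J then 2 * lam ^+ 2 * (w lj.1 ^+ 2 * p lj.1 i lj.2) else 0).
  rewrite prod_pair /=.
  rewrite exchange_big /= [RHS](bigID (fun j => j \in J)) /=.
  rewrite [X in _ = _ * X]big1 ?mulr1; last first.
    by move=> j hj; apply: big1 => l _; rewrite (negbTE hj) expR0.
  apply: eq_bigr => j hj; rewrite mulr_sumr expR_sum; apply: eq_bigr => l _.
  by rewrite hj.
apply: ler_prod => lj _; apply/andP; split.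
  apply: addr_ge0; apply: mulr_ge0; rewrite ?expR_ge0 //; case/andP: (hp lj.1 i lj.2) => //.
  by move=> _ h1; rewrite subr_ge0.
rewrite /f; case: ifP => hj; last by rewrite !mulr0 expR0 !mulr1 addrC subrK.
set q := p lj.1 i lj.2; set c := lam * (s lj.2 * w lj.1).
have hc : -1 <= c <= 1.
  have := hs lj.2; have := hw lj.1; have := hlw lj.1; rewrite /c => h1 h2 /andP [h3 h4].
  have hu : 0 <= lam * w lj.1 by apply: mulr_ge0.
  have -> : lam * (s lj.2 * w lj.1) = s lj.2 * (lam * w lj.1) by rewrite mulrCA.
  set u := lam * w lj.1 in hu h1 *.
  apply/andP; split; nra.
have := bern_mgf (hp lj.1 i lj.2) hc.
rewrite /= -/q => h.
have e1 : lam * (s lj.2 * w lj.1 * (1 - q)) = c * (1 - q) by rewrite /c; ring.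
have e2 : lam * (s lj.2 * w lj.1 * (0 - q)) = - (c * q) by rewrite /c; ring.
rewrite e1 e2; apply: (le_trans h); rewrite ler_expR.
have hq : 0 <= q by case/andP: (hp lj.1 i lj.2).
have hcc : c ^+ 2 <= lam ^+ 2 * w lj.1 ^+ 2.
  have -> : c ^+ 2 = s lj.2 ^+ 2 * (lam ^+ 2 * w lj.1 ^+ 2) by rewrite /c; ring.
  rewrite -[X in _ <= X]mul1r; apply: ler_wpM2r.
    by rewrite mulr_ge0 // sqr_ge0.
  case/andP: (hs lj.2) => h1 h2; nra.
have : 0 <= (lam ^+ 2 * w lj.1 ^+ 2 - c ^+ 2) * q by rewrite mulr_ge0 // subr_ge0.
move=> h3; nra.
Qed.

Lemma Yrow_chernoff (R : realType) (n L : nat) (p : 'I_L -> 'I_n -> 'I_n -> R)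
  (w : 'I_L -> R) i (J : {set 'I_n}) (s : 'I_n -> R) (lam t v : R) :
  (forall l i j, 0 <= p l i j <= 1) -> (forall l, 0 <= w l) ->
  (forall j, -1 <= s j <= 1) -> 0 <= lam -> (forall l, lam * w l <= 1) ->
  \sum_(j in J) \sum_(l < L) w l ^+ 2 * p l i j <= v ->
  Erow p i (fun rho => (t <= Yrow p w i J s rho)%R%:R) <= expR (- (lam * t) + 2 * lam ^+ 2 * v).
Proof.
move=> hp hw hs hl hlw hv.
apply: (@le_trans _ _ (Erow p i (fun rho => expR (- (lam * t)) * expR (lam * Yrow p w i J s rho)))).
  apply: Erow_le => // rho; rewrite -expRD.
  case h: (t <= Yrow p w i J s rho)%R => /=; last exact: expR_ge0.
  rewrite -expR0 ler_expR addrC -mulrN -mulrDr; apply: mulr_ge0 => //.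
  by rewrite subr_ge0.
rewrite Erow_lin expRD; apply: ler_wpM2l; first exact: expR_ge0.
apply: (le_trans (Yrow_mgf i J hp hw hs hl hlw)); rewrite ler_expR.
apply: ler_wpM2l => //; apply: mulr_ge0 => //; exact: sqr_ge0.
Qed.

Lemma Yrow_tail (R : realType) (n L : nat) (p : 'I_L -> 'I_n -> 'I_n -> R)
  (w : 'I_L -> R) i (J : {set 'I_n}) (s : 'I_n -> R) (W v sig M t : R) :
  (forall l i j, 0 <= p l i j <= 1) -> (forall l, 0 <= w l) ->
  (forall j, -1 <= s j <= 1) -> 0 < W -> (forall l, w l <= W) -> 0 < v ->
  8 * v <= sig -> 2 * W * M <= sig ->
  \sum_(j in J) \sum_(l < L) w l ^+ 2 * p l i j <= v ->
  0 <= t <= M ->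
  Erow p i (fun rho => (t <= Yrow p w i J s rho)%R%:R) <= expR (- (t ^+ 2 / sig)).
Proof.
move=> hp hw hs hW hwW hv h8 h2 hV /andP [t0 tM].
have sig0 : 0 < sig by lra.
have [htW|htW] := leP (t * W) (4 * v).
  pose lam := t / (4 * v).
  have hl : 0 <= lam by rewrite /lam divr_ge0 //; lra.
  have hlw : forall l, lam * w l <= 1.
    move=> l; rewrite /lam mulrAC ler_pdivrMr; last lra.
    rewrite mul1r; apply: le_trans htW; apply: ler_wpM2l => //.
  apply: (le_trans (Yrow_chernoff t hp hw hs hl hlw hV)); rewrite ler_expR.
  have e : - (lam * t) + 2 * lam ^+ 2 * v = - (t ^+ 2 / (8 * v)).
    by rewrite /lam; field; lra.
  rewrite e lerN2; apply: ler_wpM2l; first exact: sqr_ge0.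
  rewrite lef_pV2 ?posrE //; lra.
pose lam := W^-1.
have hl : 0 <= lam by rewrite /lam invr_ge0 ltW.
have hlw : forall l, lam * w l <= 1.
  by move=> l; rewrite /lam mulrC ler_pdivrMr // mul1r.
apply: (le_trans (Yrow_chernoff t hp hw hs hl hlw hV)); rewrite ler_expR.
have e1 : - (lam * t) + 2 * lam ^+ 2 * v <= - (t / (2 * W)).
  rewrite /lam.
  have : 2 * v / W ^+ 2 <= t / (2 * W).
    rewrite ler_pdivrMr ?exprn_gt0 // mulrAC ler_pdivlMr; last lra.
    have : 4 * v * W <= t * W * W by apply: ler_wpM2r; lra.
    move=> h; rewrite expr2; lra.
  have -> : 2 * W^-1 ^+ 2 * v = 2 * v / W ^+ 2 by rewrite exprVn; ring.
  have -> : W^-1 * t = t / W by rewrite mulrC.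
  have -> : t / W = t / (2 * W) + t / (2 * W) by field; apply: lt0r_neq0.
  lra.
apply: (le_trans e1); rewrite lerN2.
rewrite ler_pdivrMr // mulrAC ler_pdivlMr; last lra.
rewrite expr2 -mulrA; apply: ler_wpM2l => //; nra.
Qed.

Lemma sqr_normr (R : realType) (x : R) : `|x| ^+ 2 = x ^+ 2.
Proof. by rewrite real_normK // num_real. Qed.

Lemma Erow_add (R : realType) (n L : nat) (p : 'I_L -> 'I_n -> 'I_n -> R) i
  (f g : rowT L n -> R) :
  Erow p i (fun x => f x + g x) = Erow p i f + Erow p i g.
Proof. by rewrite /Erow -big_split; apply: eq_bigr => x _; rewrite mulrDr. Qed.

Lemma geo_le2 (R : realType) (q : R) (N : nat) : 0 <= q <= 1 / 2 ->
  \sum_(k < N) q ^+ k <= 2.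
Proof.
case/andP => q0 q1; elim: N => [|N IH]; first by rewrite big_ord0; lra.
rewrite big_ord_recl expr0.
have -> : \sum_(i < N) q ^+ (bump 0 i) = q * \sum_(i < N) q ^+ i.
  by rewrite mulr_sumr; apply: eq_bigr => k _; rewrite exprS.
have : q * \sum_(i < N) q ^+ i <= 1 / 2 * 2.
  apply: ler_pM => //; apply: sumr_ge0 => k _; exact: exprn_ge0.
lra.
Qed.

Lemma e_ge2 (R : realType) : 2 <= expR (1 : R).
Proof. by have := expR_ge1Dx (1 : R). Qed.

Lemma ind_le_exp (R : realType) (z : R) (N : nat) : 0 <= z -> z < N%:R ->
  expR z <= \sum_(k < N) expR (k%:R + 1) * (k%:R <= z)%R%:R.
Proof.
move=> z0 zN.
have hk : (Num.truncn z < N)%N by rewrite truncn_lt_nat.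
rewrite (bigD1 (Ordinal hk)) //= -[X in X <= _]addr0; apply: lerD.
  have /andP [h1 h2] := truncn_itv z0.
  rewrite h1 mulr1 ler_expR; rewrite -natr1 in h2; exact: ltW.
apply: sumr_ge0 => k _; apply: mulr_ge0; [exact: expR_ge0|exact: ler0n].
Qed.

Lemma row_sq_mgf (R : realType) (n L : nat) (p : 'I_L -> 'I_n -> 'I_n -> R)
  (w : 'I_L -> R) i (J : {set 'I_n}) (s : 'I_n -> R) (W v sig M : R)
  (lt : rowT L n -> bool) :
  (forall l i j, 0 <= p l i j <= 1) -> (forall l, 0 <= w l) ->
  (forall j, -1 <= s j <= 1) -> 0 < W -> (forall l, w l <= W) -> 0 < v ->
  8 * v <= sig -> 2 * W * M <= sig -> 0 <= M ->
  \sum_(j in J) \sum_(l < L) w l ^+ 2 * p l i j <= v ->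
  (forall rho, lt rho -> `|Yrow p w i J s rho| <= M) ->
  Erow p i (fun rho => expR ((if lt rho then Yrow p w i J s rho ^+ 2 else 0) / (2 * sig)))
    <= expR 3.
Proof.
move=> hp hw hs hW hwW hv h8 h2 hM hV hlt.
have sig0 : 0 < sig by lra.
have hs' : forall j, -1 <= - s j <= 1.
  by move=> j; case/andP: (hs j) => a b; apply/andP; split; lra.
set z := fun rho => (if lt rho then Yrow p w i J s rho ^+ 2 else 0) / (2 * sig).
have z0 : forall rho, 0 <= z rho.
  move=> rho; rewrite /z; apply: divr_ge0; last lra.
  by case: (lt rho) => //; exact: sqr_ge0.
set Nz := M ^+ 2 / (2 * sig).
pose N := (Num.truncn Nz).+1.
have zN : forall rho, z rho < N%:R.
  move=> rho; apply: (@le_lt_trans _ _ Nz); last first.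
    have : 0 <= Nz by rewrite /Nz divr_ge0 ?sqr_ge0 //; lra.
    by move/truncn_itv => /andP [].
  rewrite /z /Nz ler_pM2r ?invr_gt0; last lra.
  case h: (lt rho); last exact: sqr_ge0.
  have := hlt rho h => hy.
  rewrite -sqr_normr; have := normr_ge0 (Yrow p w i J s rho); nra.
apply: (@le_trans _ _ (Erow p i (fun rho => \sum_(k < N) expR (k%:R + 1) * (k%:R <= z rho)%R%:R))).
  by apply: Erow_le => // rho; apply: ind_le_exp; [exact: z0 | exact: zN].
rewrite Erow_sum.
apply: (@le_trans _ _ (\sum_(k < N) expR (k%:R + 1) * (2 * expR (- (2 * k%:R))))).
  apply: ler_sum => k _; rewrite Erow_lin; apply: ler_wpM2l; first exact: expR_ge0.
  set t := Num.sqrt (2 * sig * k%:R).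
  have t0 : 0 <= t by exact: sqrtr_ge0.
  have tt : t ^+ 2 = 2 * sig * k%:R by rewrite sqr_sqrtr // mulr_ge0 //; lra.
  have [tM|tM] := leP t M.
    apply: (@le_trans _ _ (Erow p i (fun rho => (t <= Yrow p w i J s rho)%R%:R
                                     + (t <= Yrow p w i J (fun j => - s j) rho)%R%:R))).
      apply: Erow_le => // rho; rewrite Yrow_opp.
      case hk: (k%:R <= z rho)%R; last by apply: addr_ge0; exact: ler0n.
      rewrite /=.
      have hy : t ^+ 2 <= Yrow p w i J s rho ^+ 2.
        move: hk; rewrite /z; case: (lt rho).
          by rewrite ler_pdivlMr; [rewrite tt mulrC|lra].
        rewrite mul0r => hk0; rewrite tt.
        have -> : k%:R = 0 :> R by apply/eqP; rewrite eq_le hk0 ler0n.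
        rewrite mulr0; exact: sqr_ge0.
      have : t <= `|Yrow p w i J s rho|.
        have := normr_ge0 (Yrow p w i J s rho); rewrite -sqr_normr in hy; nra.
      set y := Yrow p w i J s rho => hty.
      case: (lerP t y) => h; first by rewrite /= lerDl ler0n.
      have : t <= - y by move: hty; rewrite ler_normr => /orP [a|a] //; lra.
      by move=> ->; rewrite /= lerDr ler0n.
    rewrite Erow_add.
    have ht : 0 <= t <= M by rewrite t0 tM.
    have e1 := Yrow_tail hp hw hs hW hwW hv h8 h2 hV ht.
    have e2 := Yrow_tail hp hw hs' hW hwW hv h8 h2 hV ht.
    have -> : expR (- (2 * k%:R)) = expR (- (t ^+ 2 / sig)).
      by congr expR; rewrite tt; field; apply: lt0r_neq0.
    lra.
  apply: (@le_trans _ _ 0); last by rewrite mulr_ge0 ?expR_ge0.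
  apply: (@le_trans _ _ (Erow p i (fun _ => 0))); last by rewrite /Erow big1 // => x _; rewrite mulr0.
  apply: Erow_le => // rho.
  case hk: (k%:R <= z rho)%R => //=; exfalso.
  move: hk; rewrite /z; case h: (lt rho).
    rewrite ler_pdivlMr; last lra.
    have := hlt rho h; have := normr_ge0 (Yrow p w i J s rho).
    rewrite -sqr_normr; move=> a b c; nra.
  rewrite mul0r => hk0.
  have k0 : k%:R = 0 :> R by apply/eqP; rewrite eq_le hk0 ler0n.
  move: tM; rewrite /t k0 mulr0 sqrtr0; lra.
have eq : forall k : 'I_N, expR (k%:R + 1) * (2 * expR (- (2 * k%:R)))
    = 2 * expR (1 : R) * expR (-1 : R) ^+ k.
  move=> k; rewrite -(@expRM_natl R k (-1)) mulrCA -expRD -mulrA -expRD; congr (_ * expR _); lra.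
under eq_bigr do rewrite eq.
rewrite -mulr_sumr.
have e2 := e_ge2 R.
have q12 : 0 <= expR (-1 : R) <= 1 / 2.
  rewrite expR_ge0 /= expRN; have : (expR (1:R))^-1 <= 2^-1 by rewrite lef_pV2 ?posrE ?expR_gt0.
  lra.
apply: (@le_trans _ _ (2 * expR 1 * 2)).
  apply: ler_wpM2l; [by rewrite mulr_ge0 ?expR_ge0 | exact: geo_le2].
have -> : (3 : R) = 1 + 1 + 1 by lra.
rewrite !expRD.
have h1 : 0 <= expR (1 : R) by exact: expR_ge0.
nra.
Qed.

Lemma lnE_split (R : realType) (n m : nat) : (0 < m)%N -> (0 < n)%N ->
  ln (expR 1 * n%:R / m%:R) = 1 + ln (n%:R / m%:R) :> R.
Proof.
move=> m0 n0; rewrite -mulrA lnM ?expRK //; rewrite posrE ?expR_gt0 //.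
by rewrite divr_gt0 // ltr0n.
Qed.

Lemma Lm_ge1 (R : realType) (n m : nat) : (1 <= m <= n)%N ->
  1 <= ln (expR 1 * n%:R / m%:R) :> R.
Proof.
case/andP => m1 mn; rewrite lnE_split //; last exact: leq_trans mn.
rewrite lerDl; apply: ln_ge0; rewrite ler_pdivlMr ?ltr0n // mul1r ler_nat //.
Qed.

Lemma ln_le_mLm (R : realType) (n m : nat) : (1 <= m <= n)%N ->
  ln n%:R <= m%:R * ln (expR 1 * n%:R / m%:R) :> R.
Proof.
case/andP => m1 mn; have n0 : (0 < n)%N by exact: leq_trans mn.
rewrite lnE_split // ln_div ?posrE ?ltr0n //.
have h1 : ln m%:R <= ln n%:R :> R by rewrite ler_ln ?posrE ?ltr0n // ler_nat.
have h2 : ln m%:R <= m%:R - 1 :> R.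
  have := @le_ln1Dx R (m%:R - 1); rewrite addrCA subrr addr0; apply.
  have : (1 : R) <= m%:R by rewrite ler1n.
  lra.
have h3 : 0 <= ln m%:R :> R by apply: ln_ge0; rewrite ler1n.
have h4 : (1 : R) <= m%:R by rewrite ler1n.
nra.
Qed.

Lemma binom_bound (R : realType) (n m : nat) : (1 <= m <= n)%N ->
  ('C(n, m))%:R <= expR (m%:R * ln (expR 1 * n%:R / m%:R)) :> R.
Proof.
case/andP => m1 mn; have n0 : (0 < n)%N by exact: leq_trans mn.
set x : R := m%:R / n%:R.
have x0 : 0 < x by rewrite divr_gt0 ?ltr0n.
have h1 : x ^+ m * ('C(n, m))%:R <= (x + 1) ^+ n.
  rewrite exprD1n (bigD1 (Ordinal (leq_ltn_trans mn (ltnSn n)))) //= -[leLHS]addr0.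
  rewrite mulr_natr; apply: lerD => //; apply: sumr_ge0 => k _.
  by rewrite mulrn_wge0 // exprn_ge0 // ltW.
have h2 : (x + 1) ^+ n <= expR (m%:R) :> R.
  apply: (@le_trans _ _ (expR x ^+ n)).
    apply: lerXn2r; rewrite ?nnegrE ?expR_ge0 //; first by rewrite addr_ge0 // ltW.
    by rewrite addrC expR_ge1Dx.
  rewrite -expRM_natl; rewrite /x mulrC divfK // pnatr_eq0 -lt0n //.
rewrite lnE_split // mulrDr mulr1 expRD.
have e : expR (m%:R * ln (n%:R / m%:R)) = x ^-1 ^+ m.
  rewrite expRM_natl lnK ?posrE ?divr_gt0 ?ltr0n //.
  by rewrite /x invf_div.
rewrite e; rewrite -(ler_pM2l (exprn_gt0 m x0)) mulrCA -exprMn mulfV ?expr1n ?mulr1.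
  exact: le_trans h1 h2.
exact: lt0r_neq0.
Qed.

Definition Fq (R : realType) (n : nat) (B : 'M[R]_n) (I' J : {set 'I_n}) (x : 'I_n -> R) : R :=
  \sum_(i in I') (\sum_(j in J) B i j * x j) ^+ 2.

Definition upd (R : realType) (n : nat) (y : 'I_n -> R) (j0 : 'I_n) (u : R) : 'I_n -> R :=
  fun j => if j == j0 then u else y j.

Lemma upd_lin (R : realType) (n : nat) (B : 'M[R]_n) (J : {set 'I_n}) y j0 u i :
  \sum_(j in J) B i j * upd y j0 u j =
  \sum_(j in J) B i j * y j + (u - y j0) * \sum_(j in J) B i j * (j == j0)%:R.
Proof.
rewrite mulr_sumr -big_split; apply: eq_bigr => j _ /=; rewrite /upd.
by case: eqP => [->|_]; rewrite ?mulr1 ?mulr0 ?addr0 //; ring.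
Qed.

Lemma Fq_upd (R : realType) (n : nat) (B : 'M[R]_n) (I' J : {set 'I_n}) y j0 :
  -1 <= y j0 <= 1 ->
  Fq B I' J y <= Num.max (Fq B I' J (upd y j0 1)) (Fq B I' J (upd y j0 (-1))).
Proof.
case/andP => t1 t2; set t := y j0 in t1 t2 *.
apply: (@le_trans _ _ ((1 + t) / 2 * Fq B I' J (upd y j0 1) + (1 - t) / 2 * Fq B I' J (upd y j0 (-1)))).
  rewrite /Fq !mulr_sumr -big_split; apply: ler_sum => i _ /=.
  rewrite !upd_lin -/t.
  set A := \sum_(j in J) B i j * y j; set b := \sum_(j in J) B i j * (j == j0)%:R.
  have : 0 <= b ^+ 2 * (1 - t ^+ 2).
    apply: mulr_ge0; first exact: sqr_ge0.
    nra.
  move=> h; nra.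
set a := Fq B I' J (upd y j0 1); set c := Fq B I' J (upd y j0 (-1)).
have ha : a <= Num.max a c by rewrite le_max lexx.
have hc : c <= Num.max a c by rewrite le_max lexx orbT.
nra.
Qed.

Lemma vertex_aux (R : realType) (n : nat) (B : 'M[R]_n) (I' J : {set 'I_n}) (s : seq 'I_n) :
  forall x : 'I_n -> R, (forall j, -1 <= x j <= 1) ->
  exists y : 'I_n -> R, (forall j, -1 <= y j <= 1) /\
    (forall j, j \in s -> y j = 1 \/ y j = -1) /\ Fq B I' J x <= Fq B I' J y.
Proof.
elim: s => [|j0 s IH] x hx.
  by exists x; split => //; split => // j; rewrite in_nil.
have [y [hy [hs hF]]] := IH x hx.
have hu : forall u, -1 <= u <= 1 -> forall j, -1 <= upd y j0 u j <= 1.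
  by move=> u hu j; rewrite /upd; case: eqP.
have hm := Fq_upd B I' J (hy j0).
have hsu : forall u, u = 1 \/ u = -1 -> forall j, j \in j0 :: s -> upd y j0 u j = 1 \/ upd y j0 u j = -1.
  move=> u hu1 j; rewrite in_cons /upd; case: eqP => [_ _|_ /= hj] //; exact: hs.
have [h|h] := leP (Fq B I' J (upd y j0 (-1))) (Fq B I' J (upd y j0 1)).
  exists (upd y j0 1); split; first by apply: hu; apply/andP; split; lra.
  split; first by apply: hsu; left.
  by apply: (le_trans hF); apply: (le_trans hm); rewrite max_l.
exists (upd y j0 (-1)); split; first by apply: hu; apply/andP; split; lra.
split; first by apply: hsu; right.
by apply: (le_trans hF); apply: (le_trans hm); rewrite max_r // ltW.
Qed.

Definition sgnK (R : realType) (n : nat) (K : {set 'I_n}) : 'I_n -> R :=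
  fun j => if j \in K then -1 else 1.

Lemma vertex (R : realType) (n : nat) (B : 'M[R]_n) (I' J : {set 'I_n}) (x : 'I_n -> R) :
  (forall j, `|x j| <= 1) ->
  exists K : {set 'I_n}, K \subset J /\ Fq B I' J x <= Fq B I' J (sgnK R K).
Proof.
move=> hx.
have hx' : forall j, -1 <= x j <= 1 by move=> j; rewrite -ler_norml.
have [y [hy [hs hF]]] := vertex_aux B I' J (enum J) hx'.
exists [set j in J | y j == -1]; split; first by apply/fintype.subsetP => j; rewrite inE => /andP [].
apply: (le_trans hF); apply: ler_sum => i _; rewrite le_eqVlt; apply/orP; left; apply/eqP.
congr (_ ^+ 2); apply: eq_bigr => j hj; congr (_ * _).
rewrite /sgnK inE hj /=.
have := hs j; rewrite mem_enum => /(_ hj) [->|->].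
  by rewrite ifF //; apply/eqP => h; have : (1 : R) = -1 by []; lra.
by rewrite eqxx.
Qed.

Lemma norm_le (R : realType) (n : nat) (B : 'M[R]_n) (I' J : {set 'I_n}) (T : R) :
  (forall K : {set 'I_n}, K \subset J -> Fq B I' J (sgnK R K) <= T) ->
  norm_inf2 B I' J <= Num.sqrt T.
Proof.
move=> hK; apply: ge_sup.
  exists (Num.sqrt (\sum_(i in I') (\sum_(j in J) B i j * (fun _ => 0) j) ^+ 2)).
  by exists (fun _ => 0); split => // j; rewrite normr0.
move=> y [x [hx ->]].
have [K [hKJ hF]] := vertex B I' J hx.
rewrite ler_sqrt; last first.
  apply: (le_trans _ (hK K hKJ)); apply: sumr_ge0 => i _; exact: sqr_ge0.
exact: le_trans hF (hK K hKJ).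
Qed.

Lemma term_le_sum (R : realType) (I : finType) (P : pred I) (F : I -> R) (i0 : I) :
  P i0 -> (forall i, P i -> 0 <= F i) -> F i0 <= \sum_(i | P i) F i.
Proof.
move=> h0 hF; rewrite (bigD1 i0) //= lerDl; apply: sumr_ge0 => i /andP [hi _].
exact: hF.
Qed.

Lemma bigmax_ge0 (R : realType) (I : finType) (F : I -> R) :
  0 <= \big[Num.max/0]_(i : I) F i.
Proof. by elim/big_rec: _ => // i x _ hx; rewrite le_max hx orbT. Qed.

Lemma dl_ge (R : realType) (n L : nat) (p : 'I_L -> 'I_n -> 'I_n -> R) l i j :
  n%:R * p l i j <= dl p l.
Proof. by rewrite /dl; have := le_bigmax 0 (fun ij : 'I_n * 'I_n => n%:R * p l ij.1 ij.2) (i, j). Qed.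

Lemma dl_ge0 (R : realType) (n L : nat) (p : 'I_L -> 'I_n -> 'I_n -> R) l : 0 <= dl p l.
Proof. exact: bigmax_ge0. Qed.

Lemma w_le_inf (R : realType) (L : nat) (w : 'I_L -> R) l : w l <= w_inf w.
Proof.
apply: (le_trans (ler_norm (w l))); rewrite /w_inf.
by have := le_bigmax 0 (fun l : 'I_L => `|w l|) l.
Qed.

Lemma sum_draws_const (R : realType) (n m : nat) (c : R) :
  \sum_(I in [set I0 : {set 'I_n} | #|I0| == m]) c = ('C(n, m))%:R * c.
Proof. by rewrite sumr_const card_draws card_ord mulr_natl. Qed.

Lemma sum_powerset_const (R : realType) (n : nat) (J : {set 'I_n}) (c : R) :
  \sum_(K in powerset J) c = (2 ^ #|J|)%:R * c.
Proof. by rewrite sumr_const card_powerset mulr_natl. Qed.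

Definition ltJ (R : realType) (n L : nat) (w : 'I_L -> R) (J : {set 'I_n}) (a : R)
  (rho : rowT L n) : bool :=
  \sum_(j in J) \sum_(l < L) w l * (rho (l, j))%:R <= a.

Definition Zrow (R : realType) (n L : nat) (p : 'I_L -> 'I_n -> 'I_n -> R) (w : 'I_L -> R)
  (a : R) (J K : {set 'I_n}) (i : 'I_n) (rho : rowT L n) : R :=
  if ltJ w J a rho then Yrow p w i J (sgnK R K) rho ^+ 2 else 0.

Lemma Bij (R : realType) (n L : nat) (p : 'I_L -> 'I_n -> 'I_n -> R) (w : 'I_L -> R)
  (x : outcome n L) i j :
  (Abar w x - EAbar p w) i j = \sum_(l < L) w l * ((x l i j)%:R - p l i j).
Proof.
have -> : (Abar w x - EAbar p w) i j = Abar w x i j - EAbar p w i j by rewrite !mxE.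
by rewrite EAbarE /Abar mxE -sumrB; apply: eq_bigr => l _; rewrite mulrBr.
Qed.

Lemma Fq_Z (R : realType) (n L : nat) (p : 'I_L -> 'I_n -> 'I_n -> R) (w : 'I_L -> R)
  (a : R) (I J K : {set 'I_n}) (x : outcome n L) :
  Fq (Abar w x - EAbar p w) [set i in I | \sum_(j in J) Abar w x i j <= a] J (sgnK R K)
  = \sum_(i in I) Zrow p w a J K i (rowf x i).
Proof.
rewrite /Fq big_mkcond [RHS]big_mkcond; apply: eq_bigr => i _.
rewrite inE; case: (i \in I) => //=.
rewrite /Zrow /ltJ.
have -> : \sum_(j in J) Abar w x i j = \sum_(j in J) \sum_(l < L) w l * (rowf x i (l, j))%:R.
  by apply: eq_bigr => j _; rewrite /Abar mxE; apply: eq_bigr => l _; rewrite /rowf ffunE.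
case: ifP => // _; congr (_ ^+ 2); rewrite /Yrow; apply: eq_bigr => j _.
rewrite mulrC Bij; congr (_ * _); apply: eq_bigr => l _.
by rewrite /rowf ffunE.
Qed.

Lemma p_le_dn (R : realType) (n L : nat) (p : 'I_L -> 'I_n -> 'I_n -> R) l i j :
  (0 < n)%N -> p l i j <= dl p l / n%:R.
Proof.
move=> n0; rewrite ler_pdivlMr ?ltr0n // mulrC; exact: dl_ge.
Qed.

Lemma sumJ_bound (R : realType) (n L : nat) (p : 'I_L -> 'I_n -> 'I_n -> R) (c : 'I_L -> R)
  (J : {set 'I_n}) (alpha : R) i :
  (0 < n)%N -> (forall l, 0 <= c l) -> #|J|%:R <= alpha * n%:R ->
  \sum_(j in J) \sum_(l < L) c l * p l i j <= alpha * \sum_(l < L) c l * dl p l.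
Proof.
move=> n0 hc hJ.
have h1 : forall j, \sum_(l < L) c l * p l i j <= (\sum_(l < L) c l * dl p l) / n%:R.
  move=> j; rewrite mulr_suml; apply: ler_sum => l _; rewrite -mulrA.
  by apply: ler_wpM2l => //; exact: p_le_dn.
apply: (le_trans (ler_sum _ (fun j _ => h1 j))).
rewrite sumr_const -[_ *+ #|J|]mulr_natr.
have s0 : 0 <= \sum_(l < L) c l * dl p l.
  by apply: sumr_ge0 => l _; apply: mulr_ge0 => //; exact: dl_ge0.
have hq : #|J|%:R / n%:R <= alpha by rewrite ler_pdivrMr ?ltr0n.
set s := \sum_(l < L) c l * dl p l in s0 *.
have : 0 <= s * (alpha - #|J|%:R / n%:R) by rewrite mulr_ge0 // subr_ge0.
have -> : s / n%:R * #|J|%:R = s * (#|J|%:R / n%:R) by ring.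
move=> h; nra.
Qed.

Lemma sgnK_bound (R : realType) (n : nat) (K : {set 'I_n}) j : -1 <= sgnK R K j <= 1.
Proof. by rewrite /sgnK; case: (j \in K); apply/andP; split; lra. Qed.

Lemma Y_bound (R : realType) (n L : nat) (p : 'I_L -> 'I_n -> 'I_n -> R) (w : 'I_L -> R)
  (J K : {set 'I_n}) (alpha : R) i (rho : rowT L n) :
  (forall l i j, 0 <= p l i j <= 1) -> (forall l, 0 <= w l) ->
  (0 < n)%N -> #|J|%:R <= alpha * n%:R ->
  ltJ w J (alpha * \sum_(l < L) w l * dl p l) rho ->
  `|Yrow p w i J (sgnK R K) rho| <= 2 * alpha * \sum_(l < L) w l * dl p l.
Proof.
move=> hp hw n0 hJ hlt.
rewrite /Yrow; apply: (le_trans (ler_norm_sum _ _ _)).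
apply: (@le_trans _ _ (\sum_(j in J) (\sum_(l < L) w l * (rho (l, j))%:R
     + \sum_(l < L) w l * p l i j))).
  apply: ler_sum => j _; rewrite normrM.
  have -> : `|sgnK R K j| = 1 by rewrite /sgnK; case: (j \in K); rewrite ?normrN normr1.
  rewrite mul1r.
  have -> : \sum_(l < L) w l * ((rho (l, j))%:R - p l i j) =
     \sum_(l < L) w l * (rho (l, j))%:R - \sum_(l < L) w l * p l i j.
    by rewrite -sumrB; apply: eq_bigr => l _; rewrite mulrBr.
  apply: (le_trans (ler_normB _ _)).
  have h1 : 0 <= \sum_(l < L) w l * (rho (l, j))%:R.
    by apply: sumr_ge0 => l _; apply: mulr_ge0 => //; exact: ler0n.
  have h2 : 0 <= \sum_(l < L) w l * p l i j.
    by apply: sumr_ge0 => l _; apply: mulr_ge0 => //; case/andP: (hp l i j).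
  by rewrite (ger0_norm h1) (ger0_norm h2).
rewrite big_split /=.
have := sumJ_bound p i n0 hw hJ.
move: hlt; rewrite /ltJ; lra.
Qed.

Lemma var_bound (R : realType) (n L : nat) (p : 'I_L -> 'I_n -> 'I_n -> R) (w : 'I_L -> R)
  (J : {set 'I_n}) (alpha : R) i :
  (0 < n)%N -> #|J|%:R <= alpha * n%:R ->
  \sum_(j in J) \sum_(l < L) w l ^+ 2 * p l i j <= alpha * \sum_(l < L) w l ^+ 2 * dl p l.
Proof.
move=> n0 hJ; apply: sumJ_bound => // l; exact: sqr_ge0.
Qed.

Lemma Erow_ge0 (R : realType) (n L : nat) (p : 'I_L -> 'I_n -> 'I_n -> R) i (f : rowT L n -> R) :
  (forall l i j, 0 <= p l i j <= 1) -> (forall x, 0 <= f x) -> 0 <= Erow p i f.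
Proof.
move=> hp hf; apply: sumr_ge0 => x _; apply: mulr_ge0 => //; exact: wrow_ge0.
Qed.

Lemma inner_bound (R : realType) (n L : nat) (p : 'I_L -> 'I_n -> 'I_n -> R) (w : 'I_L -> R)
  (I J K : {set 'I_n}) (a W v sig M T : R) :
  (forall l i j, 0 <= p l i j <= 1) -> (forall l, 0 <= w l) ->
  0 < W -> (forall l, w l <= W) -> 0 < v ->
  8 * v <= sig -> 2 * W * M <= sig -> 0 <= M ->
  (forall i, \sum_(j in J) \sum_(l < L) w l ^+ 2 * p l i j <= v) ->
  (forall i rho, ltJ w J a rho -> `|Yrow p w i J (sgnK R K) rho| <= M) ->
  Expect p (fun x => expR ((\sum_(i in I) Zrow p w a J K i (rowf x i) - T) / (2 * sig)))
   <= expR (- T / (2 * sig)) * expR 3 ^+ #|I|.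
Proof.
move=> hp hw hW hwW hv h8 h2 hM hV hlt.
have sig0 : 0 < sig by lra.
pose F (i : 'I_n) (rho : rowT L n) : R :=
  if i \in I then expR (Zrow p w a J K i rho / (2 * sig)) else 1.
have e : forall x : outcome n L,
  expR ((\sum_(i in I) Zrow p w a J K i (rowf x i) - T) / (2 * sig))
  = expR (- T / (2 * sig)) * \prod_(i < n) F i (rowf x i).
  move=> x; rewrite -big_mkcond /= -expR_sum -expRD; congr expR.
  by rewrite -mulr_suml mulrBl addrC mulNr.
under eq_fun do rewrite e.
rewrite /Expect.
under eq_bigr do rewrite mulrCA.
rewrite -mulr_sumr; apply: ler_wpM2l; first exact: expR_ge0.
have := Expect_rows p F; rewrite /Expect => ->.
rewrite -prodr_const [leRHS]big_mkcond /=.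
apply: ler_prod => i _; apply/andP; split.
  apply: Erow_ge0 => // rho; rewrite /F; case: (i \in I) => //; exact: expR_ge0.
rewrite /F; case: (i \in I); last by rewrite Erow1.
apply: (row_sq_mgf (W:=W) (v:=v) (sig:=sig) (M:=M) (lt:=ltJ w J a)) => //.
  by move=> j; exact: sgnK_bound.
by move=> rho; exact: hlt.
Qed.

Lemma m_bound (R : realType) (n m : nat) (c1 alpha S r : R) :
  (1 <= m <= n)%N -> 1 <= c1 -> 0 < alpha -> 0 < S -> 1 <= r ->
  ('C(n, m))%:R * (('C(n, m))%:R * ((2 ^ m)%:R *
    (expR (- (128 * c1 * (alpha * S * m%:R * r * ln (expR 1 * n%:R / m%:R)))
              / (2 * (8 * c1 * (alpha * S)))) * expR 3 ^+ m)))
  <= expR (- ((r + 1) * ln n%:R)).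
Proof.
move=> hm c11 a0 S0 r1.
set Lm := ln (expR 1 * n%:R / m%:R).
have L1 : 1 <= Lm := Lm_ge1 R hm.
have hln : ln n%:R <= m%:R * Lm := ln_le_mLm R hm.
have hC := binom_bound R hm; rewrite -/Lm in hC.
have m1 : (1 : R) <= m%:R by rewrite ler1n; case/andP: hm.
have ln0 : 0 <= ln (n%:R : R).
  by apply: ln_ge0; rewrite ler1n; case/andP: hm => a b; exact: leq_trans a b.
have e1 : - (128 * c1 * (alpha * S * m%:R * r * Lm)) / (2 * (8 * c1 * (alpha * S)))
   = - (8 * (m%:R * r * Lm)).
  field; apply/andP; split; [lra | apply/andP; split; apply: lt0r_neq0 => //; lra].
rewrite e1 -expRM_natl.
have h2 : ((2 ^ m)%:R : R) <= expR (m%:R * 1).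
  rewrite expRM_natl natrX; apply: lerXn2r; rewrite ?nnegrE ?expR_ge0 //.
  exact: e_ge2.
have hC0 : 0 <= ('C(n, m))%:R :> R by exact: ler0n.
apply: (@le_trans _ _ (expR (m%:R * Lm) * (expR (m%:R * Lm) * (expR (m%:R * 1) *
   (expR (- (8 * (m%:R * r * Lm))) * expR (m%:R * 3)))))).
  apply: ler_pM; rewrite ?mulr_ge0 ?expR_ge0 ?ler0n //.
  apply: ler_pM; rewrite ?mulr_ge0 ?expR_ge0 ?ler0n //.
  apply: ler_pM; rewrite ?mulr_ge0 ?expR_ge0 ?ler0n //.
rewrite -!expRD ler_expR.
have : 0 <= m%:R * Lm * (r - 1) by rewrite !mulr_ge0 //; lra.
have : m%:R <= m%:R * Lm by rewrite -{1}(mulr1 m%:R) ler_wpM2l //; lra.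
have : ln n%:R * (r + 1) <= m%:R * Lm * (r + 1) by rewrite ler_wpM2r //; lra.
move=> a b c; nra.
Qed.

Lemma final_sum (R : realType) (n : nat) (r : R) :
  \sum_(m < n) expR (- ((r + 1) * ln (n%:R : R))) <= n%:R `^ (- r).
Proof.
case: n => [|n]; first by rewrite big_ord0 powR_ge0.
rewrite sumr_const card_ord /powR pnatr_eq0 /=.
set N := (n.+1%:R : R).
have hN : expR (ln N) = N by rewrite lnK // posrE ltr0n.
have e : expR (- ((r + 1) * ln N)) * N = expR (- r * ln N).
  by rewrite -{2}hN -expRD; congr expR; ring.
by rewrite -mulr_natr -/N e.
Qed.

Unset Implicit Arguments.

Theorem mainTheorem12 (R : realType) (c0 : R) (hc0 : 0 < c0) :
  exists C : R, 0 < C /\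
  forall (n L : nat) (p : 'I_L -> 'I_n -> 'I_n -> R) (w : 'I_L -> R)
         (alpha r : R),
    (forall l i j, 0 <= p l i j <= 1) ->
    (forall l, 0 < w l) ->
    \sum_(l < L) w l = 1 ->
    w_inf w * \sum_(l < L) w l * dl p l
      <= c0 * \sum_(l < L) w l ^+ 2 * dl p l ->
    0 < alpha -> 1 <= r ->
    Prob p (fun x =>
      forall (m : nat), (1 <= m <= n)%N -> m%:R <= alpha * n%:R ->
      forall I J : {set 'I_n}, #|I| = m -> #|J| = m ->
      let I' := [set i in I |
                  \sum_(j in J) Abar w x i j <= alpha * \sum_(l < L) w l * dl p l] in
      norm_inf2 (Abar w x - EAbar p w) I' J
        <= C * Num.sqrt (alpha * (\sum_(l < L) w l ^+ 2 * dl p l) * m%:R * r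
                         * ln (expR 1 * n%:R / m%:R)))
    >= 1 - n%:R `^ (- r).
Proof.
set c1 := 1 + c0.
have c11 : 1 <= c1 by rewrite /c1; lra.
exists (Num.sqrt (128 * c1)); split; first by rewrite sqrtr_gt0; lra.
move=> n L p w alpha r hp hw hw1 hc a0 r1.
have hw0 : forall l, 0 <= w l by move=> l; exact: ltW.
set D := \sum_(l < L) w l * dl p l in hc *.
set S := \sum_(l < L) w l ^+ 2 * dl p l in hc *.
have D0 : 0 <= D by apply: sumr_ge0 => l _; apply: mulr_ge0 => //; exact: dl_ge0.
have S0 : 0 <= S by apply: sumr_ge0 => l _; apply: mulr_ge0; [exact: sqr_ge0|exact: dl_ge0].
have [Seq0|Spos] := eqVneq S 0.
  have hz : forall l : 'I_L, w l ^+ 2 * dl p l = 0.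
    have hnn : forall l : 'I_L, true -> 0 <= w l ^+ 2 * dl p l.
      by move=> l _; apply: mulr_ge0; [exact: sqr_ge0|exact: dl_ge0].
    by move=> l; apply: (psumr_eq0P hnn Seq0).
  have dl0 : forall l, dl p l = 0.
    move=> l; have := hz l; move/eqP; rewrite mulf_eq0 sqrf_eq0 => /orP [h|/eqP //].
    by have := hw l; rewrite (eqP h) ltxx.
  have D00 : D = 0 by rewrite /D big1 // => l _; rewrite dl0 mulr0.
  apply: (le_trans _ (Prob_ge (f := fun _ => 0) hp (fun _ => lexx 0) _)).
    rewrite /Expect big1 ?subr0; last by move=> x _; rewrite mulr0.
    by rewrite lerBlDr lerDl powR_ge0.
  move=> x nE; exfalso; apply: nE.
  move=> m /andP [m1 mn] hma I J hI hJ /=.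
  have n0 : (0 < n)%N by exact: leq_trans m1 mn.
  have p0 : forall l i j, p l i j = 0.
    move=> l i j; apply/eqP; rewrite eq_le; case/andP: (hp l i j) => -> _; rewrite andbT.
    have := dl_ge p l i j; rewrite dl0 => h.
    by rewrite -(@ler_pM2l _ n%:R) ?ltr0n // mulr0.
  rewrite Seq0 mulr0 !mul0r sqrtr0 mulr0 -[X in _ <= X]sqrtr0.
  apply: norm_le => K hK; rewrite Fq_Z.
  rewrite big1 // => i _; rewrite /Zrow; case: ifP => // hl.
  move: hl; rewrite /ltJ D00 mulr0 => hl.
  have hnn : forall j, 0 <= \sum_(l < L) w l * (rowf x i (l, j))%:R.
    by move=> j; apply: sumr_ge0 => l _; apply: mulr_ge0 => //; exact: ler0n.
  have hz1 : forall j, j \in J -> \sum_(l < L) w l * (rowf x i (l, j))%:R = 0.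
    have h0 : \sum_(j in J) \sum_(l < L) w l * (rowf x i (l, j))%:R = 0.
      by apply/eqP; rewrite eq_le hl /=; apply: sumr_ge0 => j _.
    by apply: (psumr_eq0P (fun j _ => hnn j) h0).
  rewrite /Yrow big1 ?expr0n // => j hj.
  have hnn2 : forall l : 'I_L, true -> 0 <= w l * (rowf x i (l, j))%:R.
    by move=> l _; apply: mulr_ge0 => //; exact: ler0n.
  have h := psumr_eq0P hnn2 (hz1 j hj).
  rewrite big1 ?mulr0 // => l _; rewrite p0 subr0; exact: h.
have Sgt0 : 0 < S by rewrite lt_def Spos S0.
set W := w_inf w in hc.
have hwW : forall l, w l <= W := w_le_inf w.
have W0 : 0 < W.
  case: (pickP (@predT 'I_L)) => [l0 _|h].
    exact: lt_le_trans (hw l0) (hwW l0).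
  move: Sgt0; rewrite /S big1 ?ltxx // => l _; by have := h l.
set v := alpha * S.
have v0 : 0 < v by rewrite /v mulr_gt0.
set sig := 8 * c1 * v.
set M := 2 * alpha * D.
have h8 : 8 * v <= sig by rewrite /sig; nra.
have h2 : 2 * W * M <= sig.
  rewrite /sig /M /v.
  have : alpha * (W * D) <= alpha * (c0 * S) by rewrite ler_pM2l.
  have hS : 0 <= alpha * S by rewrite mulr_ge0 // ltW.
  have hc1 : c0 <= c1 by rewrite /c1; lra.
  have : c0 * (alpha * S) <= c1 * (alpha * S) by rewrite ler_wpM2r.
  move=> h h'; nra.
have M0 : 0 <= M by rewrite /M !mulr_ge0 //; lra.
pose T (m : nat) : R := 128 * c1 * (alpha * S * m%:R * r * ln (expR 1 * n%:R / m%:R)).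
pose f (x : outcome n L) : R :=
  \sum_(m < n | (m.+1%:R <= alpha * n%:R)%R) \sum_(I in [set I0 : {set 'I_n} | #|I0| == m.+1])
    \sum_(J in [set J0 : {set 'I_n} | #|J0| == m.+1]) \sum_(K in powerset J)
      expR ((\sum_(i in I) Zrow p w (alpha * D) J K i (rowf x i) - T m.+1) / (2 * sig)).
have f0 : forall x, 0 <= f x.
  by move=> x; do 4!(apply: sumr_ge0 => ? _); exact: expR_ge0.
apply: le_trans (Prob_ge (f := f) hp f0 _); last first.
  move=> x nE; rewrite leNgt; apply/negP => hf; apply: nE.
  move=> [//|m] /andP [_ hmn] hma I J hI hJ /=.
  rewrite -sqrtrM; last lra.
  apply: norm_le => K hK.
  rewrite Fq_Z leNgt; apply/negP => hT.
  have t1 : expR ((\sum_(i in I) Zrow p w (alpha * D) J K i (rowf x i) - T m.+1) / (2 * sig)) <= f x.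
    rewrite /f.
    apply: (le_trans _ (term_le_sum (P := (fun m0 : 'I_n => (m0.+1%:R <= alpha * n%:R)%R)) (i0 := (Ordinal hmn)) _ _)) => //=; last first.
      by move=> *; do 3!(apply: sumr_ge0 => ? _); exact: expR_ge0.
    apply: (le_trans _ (term_le_sum (P := (fun I0 => I0 \in [set I0 : {set 'I_n} | #|I0| == m.+1])) (i0 := I) _ _)) => //=; last first.
      by move=> *; do 2!(apply: sumr_ge0 => ? _); exact: expR_ge0.
      by rewrite inE hI.
    apply: (le_trans _ (term_le_sum (P := (fun I0 => I0 \in [set I0 : {set 'I_n} | #|I0| == m.+1])) (i0 := J) _ _)) => //=; last first.
      by move=> *; apply: sumr_ge0 => ? _; exact: expR_ge0.
      by rewrite inE hJ.
    apply: (le_trans _ (term_le_sum (P := (fun K0 => K0 \in powerset J)) (i0 := K) _ _)) => //=.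
    by rewrite powersetE.
  have t2 : 1 < expR ((\sum_(i in I) Zrow p w (alpha * D) J K i (rowf x i) - T m.+1) / (2 * sig)).
    rewrite expR_gt1 divr_gt0 //; last lra.
    by rewrite subr_gt0.
  by move: (lt_le_trans t2 t1); rewrite ltNge (ltW hf).
rewrite lerD2l lerN2.
apply: (le_trans _ (final_sum n r)).
rewrite /f Expect_sum.
rewrite [leRHS](bigID (fun m0 : 'I_n => (m0.+1%:R <= alpha * n%:R)%R)) /=.
apply: ler_wpDr.
  by apply: sumr_ge0 => ? _; exact: expR_ge0.
apply: ler_sum => m hma.
have hm : (1 <= m.+1 <= n)%N by rewrite ltn_ord.
have n0 : (0 < n)%N by exact: leq_ltn_trans (leq0n m) (ltn_ord m).
apply: (le_trans _ (m_bound hm c11 a0 Sgt0 r1)).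
rewrite Expect_sum.
apply: (@le_trans _ _ (\sum_(I in [set I0 : {set 'I_n} | #|I0| == m.+1])
   (('C(n, m.+1))%:R * ((2 ^ m.+1)%:R * (expR (- T m.+1 / (2 * sig)) * expR 3 ^+ m.+1))))); last first.
  by rewrite sum_draws_const.
apply: ler_sum => I hI.
rewrite Expect_sum.
apply: (@le_trans _ _ (\sum_(J in [set J0 : {set 'I_n} | #|J0| == m.+1])
   ((2 ^ m.+1)%:R * (expR (- T m.+1 / (2 * sig)) * expR 3 ^+ m.+1)))); last first.
  by rewrite sum_draws_const.
apply: ler_sum => J hJ; rewrite Expect_sum.
move: hI hJ; rewrite !inE => /eqP hI /eqP hJ.
have hJa : #|J|%:R <= alpha * n%:R by rewrite hJ.
rewrite -hJ -sum_powerset_const hJ; apply: ler_sum => K _.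
rewrite -hI.
apply: (@inner_bound R n L p w I J K (alpha * D) W v sig M (T #|I|) hp hw0 W0 hwW v0 h8 h2 M0).
  by move=> i; have := var_bound p w i n0 hJa.
move=> i rho; have := Y_bound K i hp hw0 n0 hJa (rho := rho); by apply.
Qed.
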